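(* Let $\alpha\in(0,1)\setminus\mathbb{Q}$. There is $\beta_0>0$ such that for every irrational $\beta\in(0,\beta_0)$ the following holds for the maps $T_1,T_2$ of the circle $\mathbb{S}=\mathbb{R}/\mathbb{Z}$ defined below: for every arc $K\subset\mathbb{S}$ of positive length there is a finite word $j_1,\dots,j_k\in\{1,2\}$ such that $(T_{j_1}\circ\dots\circ T_{j_k})(\mathbb{S})\subset K$.
   Context: $\mathbb{S}=\mathbb{R}/\mathbb{Z}$, with points represented by $y\in[0,1)$. Let $\delta=1-\alpha$. $T_1(y)=y+\alpha \bmod 1$. $T_2$ is the double rotation $T_2(y)=y+\alpha+\beta\bmod 1$ if $y\le\delta$, and $T_2(y)=y+\alpha\bmod1$ if $y>\delta$. *)

(* Defs.v *)
From Stdlib Require Import Reals List ZArith.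
Open Scope R_scope.

Definition irrational (x : R) : Prop :=
  forall (p q : Z), q <> 0%Z -> x * IZR q <> IZR p.

Definition mod1 (x : R) : R := frac_part x.

Definition T1 (alpha : R) (y : R) : R := mod1 (y + alpha).

Definition T2 (alpha beta : R) (y : R) : R :=
  if Rle_dec y (1 - alpha) then mod1 (y + alpha + beta) else mod1 (y + alpha).

Definition Tj (alpha beta : R) (j : nat) : R -> R :=
  if Nat.eqb j 1 then T1 alpha else T2 alpha beta.

Definition word_map (alpha beta : R) (w : list nat) (y : R) : R :=
  fold_right (fun j acc => Tj alpha beta j acc) y w.

Definition in_arc (a L z : R) : Prop :=
  0 < mod1 (z - a) < L.

(* Main.v *)
Require Import Defs.
From Stdlib Require Import Reals List ZArith Lra Lia Classical.
Open Scope R_scope.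

Definition cong (x y : R) : Prop := exists n : Z, x - y = IZR n.
Definition InArc (s l z : R) : Prop := exists n : Z, s <= z + IZR n <= s + l.

Lemma cong_refl x : cong x x.
Proof. exists 0%Z; simpl; ring. Qed.
Lemma cong_sym x y : cong x y -> cong y x.
Proof. intros [n H]; exists (-n)%Z; rewrite opp_IZR; lra. Qed.
Lemma cong_trans x y z : cong x y -> cong y z -> cong x z.
Proof. intros [n H] [m H']; exists (n+m)%Z; rewrite plus_IZR; lra. Qed.
Lemma cong_plus x y c : cong x y -> cong (x + c) (y + c).
Proof. intros [n H]; exists n; lra. Qed.
Lemma cong_int x n : cong (x + IZR n) x.
Proof. exists n; ring. Qed.
Lemma cong_eq x y : x = y -> cong x y.
Proof. intros ->; apply cong_refl. Qed.
Lemma mod1_cong x : cong (mod1 x) x.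
Proof. unfold mod1, frac_part. exists (- Int_part x)%Z. rewrite opp_IZR; ring. Qed.
Lemma mod1_range x : 0 <= mod1 x < 1.
Proof. unfold mod1; destruct (base_fp x); lra. Qed.

Lemma int_small n : -1 < IZR n < 1 -> n = 0%Z.
Proof.
  intros [H1 H2]. change (-1) with (IZR (-1)) in H1. change 1 with (IZR 1) in H2.
  apply lt_IZR in H1; apply lt_IZR in H2; lia.
Qed.

Lemma cong_unique u v : cong u v -> 0 <= u < 1 -> 0 <= v < 1 -> u = v.
Proof.
  intros [n H] Hu Hv. assert (n = 0%Z) by (apply int_small; lra). subst; simpl in H; lra.
Qed.

Lemma InArc_cong s l z z' : cong z z' -> InArc s l z -> InArc s l z'.
Proof. intros [k Hk] [n Hn]; exists (k+n)%Z; rewrite plus_IZR; lra. Qed.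
Lemma InArc_base s s' l z : cong s s' -> InArc s l z -> InArc s' l z.
Proof. intros [k Hk] [n Hn]; exists (n-k)%Z; rewrite minus_IZR; lra. Qed.
Lemma InArc_mono s l l' z : l <= l' -> InArc s l z -> InArc s l' z.
Proof. intros H [n Hn]; exists n; lra. Qed.
Lemma InArc_in s l z : s <= z <= s + l -> InArc s l z.
Proof. intros H; exists 0%Z; simpl; lra. Qed.

Definition valid (w : list nat) := Forall (fun j => j = 1%nat \/ j = 2%nat) w.

Lemma wm_app a b w1 w2 y : word_map a b (w1 ++ w2) y = word_map a b w1 (word_map a b w2 y).
Proof. unfold word_map; apply fold_right_app. Qed.
Lemma wm_cons a b j l x : word_map a b (j::l) x = Tj a b j (word_map a b l x).
Proof. reflexivity. Qed.

Lemma wm_range a b w y : 0 <= y < 1 -> 0 <= word_map a b w y < 1.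
Proof.
  intros Hy; induction w as [|j w IH]; [exact Hy|].
  rewrite wm_cons. unfold Tj. destruct (Nat.eqb j 1).
  - apply mod1_range.
  - unfold T2; destruct (Rle_dec _ _); apply mod1_range.
Qed.

Lemma wm_rot a b m x : cong (word_map a b (repeat 1%nat m) x) (x + INR m * a).
Proof.
  induction m as [|m IH].
  - simpl. apply cong_eq; ring.
  - simpl repeat. rewrite wm_cons. unfold Tj; simpl Nat.eqb. unfold T1.
    eapply cong_trans; [apply mod1_cong|]. rewrite S_INR.
    eapply cong_trans; [apply cong_plus; exact IH|]. apply cong_eq; ring.
Qed.

Lemma wm_rot_range a b m x : 0 <= x < 1 -> 0 <= word_map a b (repeat 1%nat m) x < 1.
Proof. apply wm_range. Qed.

Lemma move_in a b m x y (N : Z) : 0 < a -> 0 <= x < 1 -> cong x y ->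
  0 <= y + INR m * a + IZR N <= 1 - a ->
  cong (word_map a b (2%nat :: repeat 1%nat m) x) (y + INR (S m) * a + b).
Proof.
  intros Ha Hx Hxy Hr. rewrite wm_cons. change (Tj a b 2) with (T2 a b).
  set (v := word_map a b (repeat 1%nat m) x).
  assert (Hv : v = y + INR m * a + IZR N).
  { apply cong_unique; [| apply wm_range; auto | lra].
    eapply cong_trans; [apply wm_rot|].
    eapply cong_trans; [apply cong_plus; exact Hxy|].
    apply cong_sym. apply cong_int. }
  unfold T2. destruct (Rle_dec v (1 - a)); [|lra].
  eapply cong_trans; [apply mod1_cong|]. rewrite Hv, S_INR.
  exists N; ring.
Qed.

Lemma move_out a b m x y (N : Z) : a < 1 -> 0 <= x < 1 -> cong x y ->
  1 - a < y + INR m * a + IZR N < 1 ->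
  cong (word_map a b (2%nat :: repeat 1%nat m) x) (y + INR (S m) * a).
Proof.
  intros Ha Hx Hxy Hr. rewrite wm_cons. change (Tj a b 2) with (T2 a b).
  set (v := word_map a b (repeat 1%nat m) x).
  assert (Hv : v = y + INR m * a + IZR N).
  { apply cong_unique; [| apply wm_range; auto | lra].
    eapply cong_trans; [apply wm_rot|].
    eapply cong_trans; [apply cong_plus; exact Hxy|].
    apply cong_sym. apply cong_int. }
  unfold T2. destruct (Rle_dec v (1 - a)); [lra|].
  eapply cong_trans; [apply mod1_cong|]. rewrite Hv, S_INR.
  exists N; ring.
Qed.

Definition Img a b w (X : R -> Prop) :=
  valid w /\ forall y, 0 <= y < 1 -> X (word_map a b w y).

Lemma Img_mono a b w (X X' : R -> Prop) : (forall z, X z -> X' z) -> Img a b w X -> Img a b w X'.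
Proof. intros H [Hv Hw]; split; auto. Qed.

Lemma valid_rep m : valid (repeat 1%nat m).
Proof. induction m; simpl; constructor; auto. Qed.

Lemma Img_step a b w m (X X' : R -> Prop) : Img a b w X ->
  (forall x, 0 <= x < 1 -> X x -> X' (word_map a b (2%nat :: repeat 1%nat m) x)) ->
  Img a b (2%nat :: repeat 1%nat m ++ w) X'.
Proof.
  intros [Hv Hw] H; split.
  - constructor; [auto|]. apply Forall_app; split; auto. apply valid_rep.
  - intros y Hy. change (2%nat :: repeat 1%nat m ++ w) with ((2%nat :: repeat 1%nat m) ++ w).
    rewrite wm_app. apply H; auto. apply wm_range; auto.
Qed.

Lemma Img_rot a b w n (X X' : R -> Prop) : Img a b w X ->
  (forall x, 0 <= x < 1 -> X x -> X' (word_map a b (repeat 1%nat n) x)) ->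
  Img a b (repeat 1%nat n ++ w) X'.
Proof.
  intros [Hv Hw] H; split.
  - apply Forall_app; split; auto. apply valid_rep.
  - intros y Hy. rewrite wm_app. apply H; auto. apply wm_range; auto.
Qed.

Definition Dens (t : R) := forall u v, u < v -> exists (m:nat) (N:Z), u < INR m * t + IZR N < v.
Definition Conf (r a b g z : R) : Prop := InArc r a z \/ InArc (r + a + g) b z.

Lemma Conf_cong r a b g g' z : cong g g' -> Conf r a b g z -> Conf r a b g' z.
Proof.
  intros H [H1|H1]; [left; auto|right]. eapply InArc_base; [|exact H1].
  apply cong_plus with (c := r + a) in H. eapply cong_trans; [|eapply cong_trans; [exact H|]];
  apply cong_eq; ring.
Qed.

Lemma collapse r a b g g0 z : cong g g0 -> -a <= g0 -> g0 + b <= 0 -> Conf r a b g z -> InArc r a z.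
Proof.
  intros Hg H1 H2 Hc. apply (Conf_cong _ _ _ _ g0) in Hc; auto.
  destruct Hc as [Hc|[n Hn]]; auto. exists n; lra.
Qed.

Lemma transport al be w r a b g : 0 < al < 1 -> Dens al ->
  Img al be w (Conf r a b g) -> 0 <= a < al -> 0 <= b < 1 - al -> 0 < g -> a + g + b < 1 ->
  exists w' r', Img al be w' (Conf r' a b (g + be)).
Proof.
  intros Hal Hd Hw Ha Hb Hg Hs.
  set (lo := Rmax 0 (al - a - (1 - a - g - b))). set (hi := Rmin g (al - a)).
  assert (Hlo1 : 0 <= lo) by apply Rmax_l.
  assert (Hlo2 : al - a - (1 - a - g - b) <= lo) by apply Rmax_r.
  assert (Hhi1 : hi <= g) by apply Rmin_l.
  assert (Hhi2 : hi <= al - a) by apply Rmin_r.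
  assert (Hlh : lo < hi).
  { unfold lo, hi. apply Rmax_lub_lt; apply Rmin_glb_lt; lra. }
  destruct (Hd (1 - hi - r - a) (1 - lo - r - a)) as [m [N HmN]]; [lra|].
  set (eps := 1 - r - a - (INR m * al + IZR N)).
  exists (2%nat :: repeat 1%nat m ++ w), (r + INR (S m) * al).
  apply Img_step with (X := Conf r a b g); auto.
  intros x Hx [[n Hn]|[n Hn]].
  - left. set (y := x + IZR n).
    assert (Hxy : cong x y) by (apply cong_sym; apply cong_int).
    eapply InArc_cong; [apply cong_sym; apply (move_out al be m x y N); auto; unfold y; lra|].
    apply InArc_in; unfold y; lra.
  - right. set (y := x + IZR n).
    assert (Hxy : cong x y) by (apply cong_sym; apply cong_int).
    eapply InArc_cong; [apply cong_sym; apply (move_in al be m x y (N - 1)); auto; try lra;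
       rewrite minus_IZR; unfold y; simpl; lra|].
    apply InArc_in; unfold y; lra.
Qed.

Lemma first1 al be w s l Alo Ahi : 0 < al < 1 -> Dens al ->
  Img al be w (InArc s l) -> 0 <= Alo -> Alo < Ahi -> Ahi <= l -> Ahi <= al -> l - Alo <= 1 - al ->
  exists a w' r, Alo < a < Ahi /\ Img al be w' (Conf r a (l - a) be).
Proof.
  intros Hal Hd Hw H1 H2 H3 H4 H5.
  destruct (Hd (- s - Ahi) (- s - Alo)) as [m [N HmN]]; [lra|].
  set (p := - (INR m * al + IZR N)).
  exists (p - s), (2%nat :: repeat 1%nat m ++ w), (s + INR (S m) * al).
  split; [unfold p; lra|].
  apply Img_step with (X := InArc s l); auto.
  intros x Hx [n Hn]. set (y := x + IZR n).
  assert (Hxy : cong x y) by (apply cong_sym; apply cong_int).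
  destruct (Rlt_le_dec y p) as [Hyp|Hyp].
  - left. eapply InArc_cong; [apply cong_sym; apply (move_out al be m x y (N + 1)); auto; try lra;
       rewrite plus_IZR; unfold y, p in *; simpl; lra|].
    apply InArc_in; unfold y, p in *; lra.
  - right. eapply InArc_cong; [apply cong_sym; apply (move_in al be m x y N); auto; try lra;
       unfold y, p in *; lra|].
    apply InArc_in; unfold y, p in *; lra.
Qed.

Lemma first2 al be w s l Alo Ahi : 0 < al < 1 -> Dens al ->
  Img al be w (InArc s l) -> 0 <= Alo -> Alo < Ahi -> Ahi <= l -> Ahi <= al -> l - Alo <= 1 - al ->
  exists a w' r, Alo < a < Ahi /\ Img al be w' (Conf r a (l - a) (be - l)).
Proof.
  intros Hal Hd Hw H1 H2 H3 H4 H5.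
  destruct (Hd ((1 - al) - s - l + Alo) ((1 - al) - s - l + Ahi)) as [m [N HmN]]; [lra|].
  set (p := (1 - al) - (INR m * al + IZR N)).
  exists (s + l - p), (2%nat :: repeat 1%nat m ++ w), (p + INR (S m) * al).
  split; [unfold p; lra|].
  apply Img_step with (X := InArc s l); auto.
  intros x Hx [n Hn]. set (y := x + IZR n).
  assert (Hxy : cong x y) by (apply cong_sym; apply cong_int).
  destruct (Rle_lt_dec y p) as [Hyp|Hyp].
  - right. eapply InArc_cong; [apply cong_sym; apply (move_in al be m x y N); auto; try lra;
       unfold y, p in *; lra|].
    apply InArc_in; unfold y, p in *; lra.
  - left. eapply InArc_cong; [apply cong_sym; apply (move_out al be m x y N); auto; try lra;
       unfold y, p in *; lra|].
    apply InArc_in; unfold y, p in *; lra.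
Qed.

Lemma shrink1 al be w s l : 0 < al < 1 -> Dens al -> 0 < be ->
  Img al be w (InArc s l) -> 2 * be < l < 1 -> be < al -> be < 1 - al ->
  exists w' s', Img al be w' (InArc s' (l - be)).
Proof.
  intros Hal Hd Hbe Hw Hl H1 H2.
  set (lo := Rmax (s + be) (s + l - al)). set (hi := Rmin (s + l - be) (s + 1 - al)).
  assert (Hlo1 : s + be <= lo) by apply Rmax_l.
  assert (Hlo2 : s + l - al <= lo) by apply Rmax_r.
  assert (Hhi1 : hi <= s + l - be) by apply Rmin_l.
  assert (Hhi2 : hi <= s + 1 - al) by apply Rmin_r.
  assert (Hlh : lo < hi).
  { unfold lo, hi. apply Rmax_lub_lt; apply Rmin_glb_lt; lra. }
  destruct (Hd ((1 - al) - hi) ((1 - al) - lo)) as [m [N HmN]]; [lra|].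
  set (e := (1 - al) - (INR m * al + IZR N)).
  exists (2%nat :: repeat 1%nat m ++ w), (s + be + INR (S m) * al).
  apply Img_step with (X := InArc s l); auto.
  intros x Hx [n Hn]. set (y := x + IZR n).
  assert (Hxy : cong x y) by (apply cong_sym; apply cong_int).
  destruct (Rle_lt_dec y e) as [Hyp|Hyp].
  - eapply InArc_cong; [apply cong_sym; apply (move_in al be m x y N); auto; try lra;
       unfold y, e in *; lra|].
    apply InArc_in; unfold y, e in *; lra.
  - eapply InArc_cong; [apply cong_sym; apply (move_out al be m x y N); auto; try lra;
       unfold y, e in *; lra|].
    apply InArc_in; unfold y, e in *; lra.
Qed.

Lemma init al be : 0 < be < al -> al < 1 -> be < 1 - al -> exists w, Img al be w (InArc (al + be) (1 - be)).
Proof.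
  intros Hb Ha Hab. exists (2%nat :: repeat 1%nat 0 ++ nil).
  apply Img_step with (X := fun y => 0 <= y < 1).
  - split; [constructor|]. intros y Hy; exact Hy.
  - intros x Hx _. destruct (Rle_lt_dec x (1 - al)) as [H|H].
    + eapply InArc_cong; [apply cong_sym; apply (move_in al be 0 x x 0)|].
      * lra.
      * exact Hx.
      * apply cong_refl.
      * simpl; lra.
      * apply InArc_in; simpl; lra.
    + eapply InArc_cong; [apply cong_sym; apply (move_out al be 0 x x 0)|].
      * lra.
      * exact Hx.
      * apply cong_refl.
      * simpl; lra.
      * apply InArc_in; simpl; lra.
Qed.

Lemma iterate al be a b (G : nat -> R) k : 0 < al < 1 -> Dens al -> 0 <= a < al -> 0 <= b < 1 - al ->
  (forall j, (1 <= j < k)%nat -> 0 < G j /\ a + G j + b < 1) ->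
  (forall j, cong (G (S j)) (G j + be)) ->
  (exists w r, Img al be w (Conf r a b (G 1%nat))) -> (1 <= k)%nat ->
  exists w r, Img al be w (Conf r a b (G k)).
Proof.
  intros Hal Hd Ha Hb HG Hc Hbase. induction k as [|k IH]; intros Hk; [lia|].
  destruct (Nat.eq_dec k 0) as [->|Hk0]; [exact Hbase|].
  destruct IH as [w [r Hw]]; [intros j Hj; apply HG; lia| lia |].
  destruct (HG k) as [Hg1 Hg2]; [lia|].
  destruct (transport al be w r a b (G k)) as [w' [r' Hw']]; auto.
  exists w', r'. eapply Img_mono; [|exact Hw'].
  intros z. apply Conf_cong. apply cong_sym; apply Hc.
Qed.

Lemma min_nat (Q : nat -> Prop) : (exists k, Q k) -> exists k, Q k /\ forall j, (j < k)%nat -> ~ Q j.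
Proof.
  intros [k Hk]. induction k as [k IH] using (well_founded_induction lt_wf).
  destruct (classic (exists j, (j < k)%nat /\ Q j)) as [[j [Hj1 Hj2]]|Hn].
  - exact (IH j Hj1 Hj2).
  - exists k; split; auto. intros j Hj HQ. apply Hn; eauto.
Qed.

Lemma fin_min (f : nat -> R) K : (forall j, (1 <= j < K)%nat -> 0 < f j) ->
  exists e, 0 < e /\ forall j, (1 <= j < K)%nat -> e <= f j.
Proof.
  induction K as [|K IH]; intros H.
  - exists 1; split; [lra|]; intros; lia.
  - destruct IH as [e [He He']]; [intros; apply H; lia|].
    destruct (Nat.eq_dec K 0) as [->|HK].
    + exists e; split; auto; intros; lia.
    + assert (HfK : 0 < f K) by (apply H; lia).
      exists (Rmin e (f K)); split; [apply Rmin_glb_lt; auto|].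
      intros j Hj. destruct (Nat.eq_dec j K) as [->|Hj'].
      * apply Rmin_r.
      * eapply Rle_trans; [apply Rmin_l| apply He'; lia].
Qed.

Lemma pigeon n (f : nat -> nat) : (forall i, (i <= n)%nat -> (f i < n)%nat) ->
  exists i j, (i < j <= n)%nat /\ f i = f j.
Proof.
  revert f; induction n as [|n IH]; intros f Hf.
  - specialize (Hf 0%nat (le_n 0)); lia.
  - destruct (classic (exists i, (i <= n)%nat /\ f i = f (S n))) as [[i [Hi Hfi]]|Hno].
    + exists i, (S n); split; [lia|auto].
    + set (c := f (S n)).
      assert (Hc : (c < S n)%nat) by (apply Hf; lia).
      set (g := fun i => if Nat.eqb (f i) n then c else f i).
      destruct (IH g) as [i [j [Hij Hg]]].
      * intros i Hi. unfold g. destruct (Nat.eqb_spec (f i) n) as [E|E].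
        -- assert (c <> n) by (intro Hcn; apply Hno; exists i; split; auto; unfold c in *; lia). lia.
        -- specialize (Hf i ltac:(lia)); lia.
      * exists i, j; split; [lia|]. unfold g in Hg.
        destruct (Nat.eqb_spec (f i) n); destruct (Nat.eqb_spec (f j) n); try lia.
        -- exfalso; apply Hno; exists j; split; [lia|]. unfold c in *; lia.
        -- exfalso; apply Hno; exists i; split; [lia|]. unfold c in *; lia.
Qed.

Lemma irr_nz t (H : irrational t) (k : nat) (N : Z) : (0 < k)%nat -> INR k * t + IZR N <> 0.
Proof.
  intros Hk E. apply (H (- N)%Z (Z.of_nat k)); [lia|].
  rewrite <- INR_IZR_INZ, opp_IZR. lra.
Qed.

Lemma Int_part_nonneg x : 0 <= x -> (0 <= Int_part x)%Z.
Proof.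
  intros Hx. destruct (base_Int_part x) as [H1 H2].
  assert (IZR (-1) < IZR (Int_part x)) by (simpl; lra). apply lt_IZR in H; lia.
Qed.

Lemma small_mult t (H : irrational t) e : 0 < e ->
  exists (K : nat) (N : Z), (0 < K)%nat /\ 0 < Rabs (INR K * t + IZR N) < e.
Proof.
  intros He. destruct (archimed_cor1 e He) as [M [HM HM0]].
  set (x := fun i : nat => INR M * frac_part (INR i * t)).
  set (f := fun i => Z.to_nat (Int_part (x i))).
  assert (HMpos : 0 < INR M) by (apply lt_0_INR; lia).
  assert (Hx : forall i, 0 <= x i < INR M).
  { intros i; unfold x; destruct (base_fp (INR i * t)). split; [apply Rmult_le_pos; lra|].
    rewrite <- (Rmult_1_r (INR M)) at 2. apply Rmult_lt_compat_l; lra. }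
  destruct (pigeon M f) as [i [j [Hij Hf]]].
  { intros i _. unfold f. destruct (Hx i) as [H1 H2].
    pose proof (Int_part_nonneg _ H1).
    destruct (base_Int_part (x i)) as [H3 _].
    assert (IZR (Int_part (x i)) < IZR (Z.of_nat M)) by (rewrite <- INR_IZR_INZ; lra).
    apply lt_IZR in H4. lia. }
  assert (Hint : Int_part (x i) = Int_part (x j)).
  { unfold f in Hf. pose proof (Int_part_nonneg _ (proj1 (Hx i))).
    pose proof (Int_part_nonneg _ (proj1 (Hx j))). lia. }
  destruct (base_Int_part (x i)) as [Hi1 Hi2]. destruct (base_Int_part (x j)) as [Hj1 Hj2].
  rewrite Hint in Hi1, Hi2.
  exists (j - i)%nat, (Int_part (INR i * t) - Int_part (INR j * t))%Z.
  split; [lia|].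
  assert (Heq : INR (j - i) * t + IZR (Int_part (INR i * t) - Int_part (INR j * t))
     = (x j - x i) / INR M).
  { unfold x, frac_part. rewrite minus_INR by lia. rewrite minus_IZR. field. lra. }
  split.
  - apply Rabs_pos_lt. apply irr_nz; auto; lia.
  - rewrite Heq. unfold Rdiv. rewrite Rabs_mult, Rabs_inv, (Rabs_right (INR M)) by lra.
    apply Rle_lt_trans with (1 * / INR M); [|lra].
    apply Rmult_le_compat_r; [left; apply Rinv_0_lt_compat; lra|].
    apply Rabs_le; lra.
Qed.

Lemma mult_fill d u v : 0 < d -> d < v - u -> exists (j : nat) (N : Z), u < INR j * d + IZR N < v.
Proof.
  intros Hd Huv. set (u' := u - IZR (Int_part u)).
  destruct (base_Int_part u) as [Hu1 Hu2].
  assert (Hu' : 0 <= u' / d) by (unfold u'; apply Rmult_le_pos; [lra| left; apply Rinv_0_lt_compat; lra]).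
  set (q := Int_part (u' / d)). pose proof (Int_part_nonneg _ Hu') as Hq.
  destruct (base_Int_part (u' / d)) as [Hq1 Hq2]. fold q in Hq1, Hq2.
  exists (S (Z.to_nat q)), (Int_part u).
  rewrite S_INR, INR_IZR_INZ, Z2Nat.id by exact Hq.
  assert (A : u' < (IZR q + 1) * d).
  { apply Rmult_lt_reg_r with (/ d); [apply Rinv_0_lt_compat; lra|].
    rewrite Rmult_assoc, Rinv_r, Rmult_1_r by lra. unfold Rdiv in Hq2. lra. }
  assert (B : IZR q * d <= u').
  { apply Rmult_le_reg_r with (/ d); [apply Rinv_0_lt_compat; lra|].
    rewrite Rmult_assoc, Rinv_r, Rmult_1_r by lra. unfold Rdiv in Hq1. lra. }
  unfold u' in *. nra.
Qed.

Lemma dens_irr t : irrational t -> Dens t.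
Proof.
  intros H u v Huv. destruct (small_mult t H (v - u)) as [K [N [HK [H1 H2]]]]; [lra|].
  set (d := INR K * t + IZR N) in *.
  destruct (Rle_lt_dec 0 d) as [Hd|Hd].
  - rewrite Rabs_right in H1, H2 by lra.
    destruct (mult_fill d u v) as [j [N' HN']]; [lra|lra|].
    exists (j * K)%nat, (Z.of_nat j * N + N')%Z.
    rewrite mult_INR, plus_IZR, mult_IZR, <- INR_IZR_INZ. unfold d in HN'. nra.
  - rewrite Rabs_left in H1, H2 by lra.
    destruct (mult_fill (- d) (- v) (- u)) as [j [N' HN']]; [lra|lra|].
    exists (j * K)%nat, (Z.of_nat j * N - N')%Z.
    rewrite mult_INR, minus_IZR, mult_IZR, <- INR_IZR_INZ. unfold d in HN'. nra.
Qed.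

Lemma fr_cong be k : exists n, mod1 (INR k * be) = INR k * be + IZR n.
Proof. destruct (mod1_cong (INR k * be)) as [n Hn]. exists n; lra. Qed.

Lemma fr_pos be k : irrational be -> (1 <= k)%nat -> 0 < mod1 (INR k * be).
Proof.
  intros H Hk. destruct (mod1_range (INR k * be)) as [H1 _].
  destruct (fr_cong be k) as [n Hn].
  destruct H1 as [H1|H1]; auto. exfalso. apply (irr_nz be H k n); [lia|lra].
Qed.

Lemma fr_step be j : cong (mod1 (INR (S j) * be)) (mod1 (INR j * be) + be).
Proof.
  eapply cong_trans; [apply mod1_cong|]. apply cong_sym.
  eapply cong_trans; [apply cong_plus; apply mod1_cong|]. rewrite S_INR; apply cong_eq; ring.
Qed.

Lemma fr_dens be (H : irrational be) u v : 0 <= u -> u < v -> v <= 1 ->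
  exists k, u < mod1 (INR k * be) < v.
Proof.
  intros H1 H2 H3. destruct (dens_irr be H u v H2) as [m [N HmN]].
  exists m. assert (E : mod1 (INR m * be) = INR m * be + IZR N).
  { apply cong_unique; [| apply mod1_range | lra].
    eapply cong_trans; [apply mod1_cong|]. apply cong_sym, cong_int. }
  lra.
Qed.

Lemma fr0 be : mod1 (INR 0 * be) = 0.
Proof.
  apply cong_unique; [| apply mod1_range | lra].
  eapply cong_trans; [apply mod1_cong|]. apply cong_eq; simpl; ring.
Qed.

Lemma all_small al be : 0 < al < 1 -> irrational al -> irrational be -> 0 < be ->
  3 * be < Rmin al (1 - al) ->
  forall eps, 0 < eps -> exists w s, Img al be w (InArc s eps).
Proof.
  intros Hal Hia Hib Hbe Hb3.
  pose proof (dens_irr al Hia) as Da.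
  set (l0 := Rmin al (1 - al)).
  assert (Hl01 : l0 <= al) by apply Rmin_l. assert (Hl02 : l0 <= 1 - al) by apply Rmin_r.
  fold l0 in Hb3.
  set (P := fun l => exists w s, Img al be w (InArc s l)).
  assert (Pnn : forall l, P l -> 0 <= l).
  { intros l [w [s [_ Hw]]]. destruct (Hw 0 ltac:(lra)) as [n Hn]. lra. }
  assert (Pmono : forall l l', P l -> l <= l' -> P l').
  { intros l l' [w [s Hw]] Hl. exists w, s. eapply Img_mono; [|exact Hw].
    intros z; apply InArc_mono; auto. }
  assert (Pinit : P (1 - be)).
  { destruct (init al be) as [w Hw]; try lra. exists w, (al + be); auto. }
  set (E := fun x => exists l, P l /\ x = - l).
  destruct (completeness E) as [m [Hub Hlub]].
  { exists 0. intros x [l [Hl ->]]. apply Pnn in Hl. lra. }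
  { exists (- (1 - be)). exists (1 - be); split; auto. }
  set (Ls := - m).
  assert (Hi : forall l, P l -> Ls <= l).
  { intros l Hl. assert (E (- l)) by (exists l; auto). apply Hub in H. unfold Ls; lra. }
  assert (Hii : forall e, 0 < e -> exists l, P l /\ l < Ls + e).
  { intros e He. apply NNPP. intros Hn.
    assert (Hup : is_upper_bound E (m - e)).
    { intros x [l [Hl ->]]. destruct (Rlt_le_dec l (Ls + e)) as [Hlt|Hge].
      - exfalso; apply Hn; exists l; auto.
      - unfold Ls in Hge; lra. }
    apply Hlub in Hup. lra. }
  assert (HLs : Ls <= 0).
  { apply Rnot_lt_le. intros HLpos.
    assert (HL1 : Ls <= 1 - be) by (apply Hi; auto).
    destruct (Rlt_le_dec (2 * be) Ls) as [HA|HB].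
    -
      destruct (Hii be Hbe) as [l [[w [s Hw]] Hl]].
      assert (Hl' : Ls <= l) by (apply Hi; exists w, s; auto).
      destruct (shrink1 al be w s l) as [w' [s' Hw']]; auto; try lra.
      assert (Ls <= l - be) by (apply Hi; exists w', s'; auto). lra.
    -
      set (L := Ls) in *.
      set (fr := fun k : nat => mod1 (INR k * be)).
      assert (frr : forall k, 0 <= fr k < 1) by (intros; apply mod1_range).
      destruct (min_nat (fun k => 1 - L <= fr k)) as [k1 [Hk1 Hk1m]].
      { destruct (fr_dens be Hib (1 - L) 1) as [k Hk]; try lra. exists k; unfold fr; lra. }
      destruct (min_nat (fun k => 0 < fr k <= L)) as [k2 [Hk2 Hk2m]].
      { destruct (fr_dens be Hib 0 L) as [k Hk]; try lra. exists k; unfold fr; lra. }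
      assert (Hk1n : (1 <= k1)%nat).
      { destruct k1; [|lia]. unfold fr in Hk1; rewrite fr0 in Hk1; lra. }
      assert (Hk2n : (1 <= k2)%nat).
      { destruct k2; [|lia]. unfold fr in Hk2; rewrite fr0 in Hk2; lra. }
      set (u1 := 1 - fr k1). set (u2 := fr k2).
      assert (Hu1 : 0 < u1 <= L) by (unfold u1; specialize (frr k1); lra).
      assert (Hu2 : 0 < u2 <= L) by (unfold u2; lra).
      assert (Hnot : u1 < L \/ u2 < L).
      { destruct (Rlt_le_dec u1 L); [left; auto|]. destruct (Rlt_le_dec u2 L); [right; auto|].
        exfalso. destruct (fr_cong be k1) as [n1 Hn1]. destruct (fr_cong be k2) as [n2 Hn2].
        apply (irr_nz be Hib (k1 + k2) (n1 + n2 - 1)); [lia|].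
        rewrite plus_INR, minus_IZR, plus_IZR. simpl.
        unfold u1, u2, fr in *. lra. }
      destruct Hnot as [B1|B2].
      +
        destruct (fin_min (fun j => 1 - L - fr j) k1) as [e1 [He1 He1']].
        { intros j Hj. assert (~ (1 - L <= fr j)) by (apply Hk1m; lia). lra. }
        set (e := Rmin e1 (Rmin u1 (l0 - L))).
        assert (He : 0 < e) by (unfold e; repeat apply Rmin_glb_lt; lra).
        assert (Hea : e <= e1) by apply Rmin_l.
        assert (Heb : e <= u1) by (eapply Rle_trans; [apply Rmin_r| apply Rmin_l]).
        assert (Hec : e <= l0 - L) by (eapply Rle_trans; [apply Rmin_r| apply Rmin_r]).
        destruct (Hii e He) as [l [[w [s Hw]] Hl]].
        assert (Hl' : L <= l) by (apply Hi; exists w, s; auto).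
        set (Alo := Rmax u1 (l - u1)).
        assert (Ha1 : u1 <= Alo) by apply Rmax_l. assert (Ha2 : l - u1 <= Alo) by apply Rmax_r.
        assert (Ha3 : Alo < L) by (apply Rmax_lub_lt; lra).
        destruct (first1 al be w s l Alo L) as [a [w1 [r1 [Ha Hw1]]]]; auto; try lra.
        destruct (iterate al be a (l - a) fr k1) as [w2 [r2 Hw2]]; auto; try lra.
        * intros j Hj. split; [apply fr_pos; auto; lia|]. specialize (He1' j Hj). lra.
        * intros j; apply fr_step.
        * exists w1, r1. eapply Img_mono; [|exact Hw1]. intros z; apply Conf_cong.
          apply cong_sym. eapply cong_trans; [apply mod1_cong|]. apply cong_eq; simpl; ring.
        * assert (L <= a); [|lra]. apply Hi. exists w2, r2.
          eapply Img_mono; [|exact Hw2]. intros z. apply (collapse _ _ _ _ (- u1)).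
          -- exists 1%Z. unfold u1; simpl; ring.
          -- lra.
          -- lra.
      +
        destruct (fin_min (fun j => fr j - L) k2) as [e2 [He2 He2']].
        { intros j Hj. assert (~ (0 < fr j <= L)) by (apply Hk2m; lia).
          assert (0 < fr j) by (apply fr_pos; auto; lia). lra. }
        set (e := Rmin e2 (Rmin u2 (l0 - L))).
        assert (He : 0 < e) by (unfold e; repeat apply Rmin_glb_lt; lra).
        assert (Hea : e <= e2) by apply Rmin_l.
        assert (Heb : e <= u2) by (eapply Rle_trans; [apply Rmin_r| apply Rmin_l]).
        assert (Hec : e <= l0 - L) by (eapply Rle_trans; [apply Rmin_r| apply Rmin_r]).
        destruct (Hii e He) as [l [[w [s Hw]] Hl]].
        assert (Hl' : L <= l) by (apply Hi; exists w, s; auto).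
        set (Alo := Rmax u2 (l - u2)).
        assert (Ha1 : u2 <= Alo) by apply Rmax_l. assert (Ha2 : l - u2 <= Alo) by apply Rmax_r.
        assert (Ha3 : Alo < L) by (apply Rmax_lub_lt; lra).
        destruct (first2 al be w s l Alo L) as [a [w1 [r1 [Ha Hw1]]]]; auto; try lra.
        destruct (iterate al be a (l - a) (fun j => fr j - l) k2) as [w2 [r2 Hw2]]; auto; try lra.
        * intros j Hj. specialize (He2' j Hj). specialize (frr j). lra.
        * intros j. destruct (fr_step be j) as [n Hn]. exists n. unfold fr in *. lra.
        * exists w1, r1. eapply Img_mono; [|exact Hw1]. intros z; apply Conf_cong.
          apply cong_plus. apply cong_sym. eapply cong_trans; [apply mod1_cong|].
          apply cong_eq; simpl; ring.
        * assert (L <= a); [|lra]. apply Hi. exists w2, r2.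
          eapply Img_mono; [|exact Hw2]. intros z. apply (collapse _ _ _ _ (u2 - l)).
          -- apply cong_refl.
          -- lra.
          -- lra. }
  intros eps Heps. destruct (Hii eps Heps) as [l [Hl Hl']].
  apply (Pmono l); auto. lra.
Qed.

Theorem lemma4p1 :
  forall alpha : R, 0 < alpha < 1 -> irrational alpha ->
  exists beta0 : R, 0 < beta0 /\
    forall beta : R, 0 < beta < beta0 -> irrational beta ->
    forall a L : R, 0 <= a < 1 -> 0 < L <= 1 ->
    exists w : list nat,
      Forall (fun j => j = 1%nat \/ j = 2%nat) w /\
      forall y : R, 0 <= y < 1 -> in_arc a L (word_map alpha beta w y).
Proof.
  intros al Hal Hia.
  assert (Hm : 0 < Rmin al (1 - al)) by (apply Rmin_glb_lt; lra).
  exists (Rmin al (1 - al) / 3). split; [lra|].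
  intros be Hbe Hib a L Ha HL.
  destruct (all_small al be Hal Hia Hib (proj1 Hbe) ltac:(lra) (L / 2) ltac:(lra)) as [w [s Hw]].
  destruct (dens_irr al Hia (a - s) (a - s + L / 2)) as [n [N HnN]]; [lra|].
  assert (Hi : Img al be (repeat 1%nat n ++ w) (in_arc a L)).
  { apply Img_rot with (X := InArc s (L / 2)); auto.
    intros x Hx [k Hk]. unfold in_arc.
    set (V := x + IZR k + INR n * al + IZR N - a).
    assert (E : mod1 (word_map al be (repeat 1%nat n) x - a) = V).
    { apply cong_unique; [| apply mod1_range | unfold V; lra].
      eapply cong_trans; [apply mod1_cong|].
      destruct (wm_rot al be n x) as [j Hj]. exists (j - k - N)%Z.
      rewrite !minus_IZR. unfold V. lra. }
    rewrite E. unfold V; lra. }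
  exists (repeat 1%nat n ++ w). exact Hi.
Qed.
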